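(* For every LTL formula $\varphi$ in PNF, $\mathrm{simp}(\varphi)\subseteq\mathrm{SET}(\partial^+(\varphi))$.
   Context: LTL formulae in positive normal form: $\varphi,\psi ::= p \mid \neg p \mid \mathbf{tt} \mid \mathbf{ff} \mid \varphi\wedge\psi \mid \varphi\vee\psi \mid \bigcirc\varphi \mid \varphi\,\mathcal{U}\,\psi \mid \varphi\,\mathcal{R}\,\psi$ (also derived $\Diamond\varphi=\mathbf{tt}\,\mathcal{U}\,\varphi$, $\Box\varphi=\mathbf{ff}\,\mathcal{R}\,\varphi$). A temporal formula is one not starting with $\wedge$ or $\vee$. $\varphi\,\dot\wedge\,\psi$ denotes formal conjunction, normalized modulo associativity, commutativity and idempotence w.r.t. a fixed total order on formulae. $\mathrm{simp}(\varphi\wedge\psi)=\{\varphi'\,\dot\wedge\,\psi'\mid\varphi'\in\mathrm{simp}(\varphi),\psi'\in\mathrm{simp}(\psi)\}$, $\mathrm{simp}(\varphi\vee\psi)=\mathrm{simp}(\varphi)\cup\mathrm{simp}(\psi)$, $\mathrm{simp}(\varphi)=\{\varphi\}$ for temporal $\varphi$. Iterated partial derivatives: $\partial^+(\ell)=\{\ell\}$ for literals $\ell$, $\partial^+(\mathbf{tt})=\{\mathbf{tt}\}$, $\partial^+(\mathbf{ff})=\{\mathbf{ff}\}$, $\partial^+(\varphi\vee\psi)=\partial^+(\varphi\wedge\psi)=\partial^+(\varphi)\cup\partial^+(\psi)$, $\partial^+(\bigcirc\varphi)=\{\bigcirc\varphi\}\cup\partial^+(\varphi)$, $\partial^+(\Diamond\varphi)=\{\Diamond\varphi\}\cup\partial^+(\varphi)$,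 $\partial^+(\Box\varphi)=\{\Box\varphi\}\cup\partial^+(\varphi)$, $\partial^+(\varphi\,\mathcal{U}\,\psi)=\{\varphi\,\mathcal{U}\,\psi\}\cup\partial^+(\psi)\cup\partial^+(\varphi)$, $\partial^+(\varphi\,\mathcal{R}\,\psi)=\{\varphi\,\mathcal{R}\,\psi\}\cup\partial^+(\psi)\cup\partial^+(\varphi)$. For an ordered set $X=\{x_1,x_2,\dots\}$, $\mathrm{SET}(X)=\{\mathbf{tt}\}\cup\{x_{i_1}\,\dot\wedge\,\cdots\,\dot\wedge\,x_{i_n}\mid n\ge1, i_1<\dots<i_n\}$, the set of all formal conjunctions of elements of $X$. *)

(* Defs.v *)
From HB Require Import structures.
From mathcomp Require Import all_boot.
Set Implicit Arguments. Unset Strict Implicit. Unset Printing Implicit Defensive.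

Inductive ltl : Type :=
  | Lpos of nat
  | Lneg of nat
  | Ltt | Lff
  | Land of ltl & ltl
  | Lor of ltl & ltl
  | Lnext of ltl
  | Luntil of ltl & ltl
  | Lrelease of ltl & ltl.

Lemma ltl_comparable : comparable ltl.
Proof. move=> x y; rewrite /decidable; decide equality; try (case: (eqVneq n n0) => [->|/eqP]; [left|right]; done). Qed.
HB.instance Definition _ := comparableMixin ltl_comparable.

Definition Lev (f : ltl) := Luntil Ltt f.
Definition Lalw (f : ltl) := Lrelease Lff f.

(* A formal conjunction (normalized modulo associativity, commutativity and
   idempotence) is represented by the sequence of its conjuncts, two formal
   conjunctions being identified when they have the same elements (=i). *)
Definition fconj := seq ltl.
Definition fconj_and (c d : fconj) : fconj := c ++ d.

Fixpoint simp (f : ltl) : seq fconj :=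
  match f with
  | Land g h => [seq fconj_and a b | a <- simp g, b <- simp h]
  | Lor g h => simp g ++ simp h
  | _ => [:: [:: f]]
  end.

(* iterated partial derivatives (as an ordered list; union = concatenation).
   The clauses for <> and [] take precedence over those for U and R. *)
Fixpoint dplus (f : ltl) : seq ltl :=
  match f with
  | Lpos _ | Lneg _ | Ltt | Lff => [:: f]
  | Land g h | Lor g h => dplus g ++ dplus h
  | Lnext g => f :: dplus g
  | Luntil Ltt g => f :: dplus g
  | Lrelease Lff g => f :: dplus g
  | Luntil g h | Lrelease g h => f :: (dplus h ++ dplus g)
  end.

(* membership in SET(X): either the formula tt, or a formal conjunction
   x_{i1} .& ... .& x_{in} with n >= 1 and i1 < ... < in (a nonempty
   subsequence of X), up to ACI-normalization (=i). *)
Definition in_SET (X : seq ltl) (c : fconj) : Prop :=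
  c =i [:: Ltt] \/ exists2 d : fconj, (d != [::]) && subseq d X & c =i d.

(* Main.v *)
Require Import Defs.
From mathcomp Require Import all_boot.

Lemma self_in (f : ltl) : (match f with Land _ _ | Lor _ _ => false | _ => true end) -> f \in dplus f.
Proof.
case: f => //=; try by move=> *; rewrite inE eqxx.
- by case=> *; rewrite inE eqxx.
- by case=> *; rewrite inE eqxx.
Qed.

Lemma simp_sub (f : ltl) : forall c, c \in simp f -> (c != [::]) && all (mem (dplus f)) c.
Proof.
elim: f => [n|n|||g IHg h IHh|g IHg h IHh|g IHg|g IHg h IHh|g IHg h IHh] c;
  try (rewrite /= inE => /eqP ->; rewrite /= andbT; apply: self_in; done).
- move=> /allpairsP [[a b] /= [Ha Hb ->]].
  move: (IHg _ Ha) (IHh _ Hb) => /andP [na sa] /andP [nb sb].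
  rewrite /fconj_and /= all_cat; apply/and3P; split.
  + by case: a na {Ha sa}.
  + by apply/allP => x /(allP sa) /=; rewrite mem_cat => ->.
  + by apply/allP => x /(allP sb) /=; rewrite mem_cat orbC => ->.
- rewrite /= mem_cat => /orP [H|H].
  + move: (IHg _ H) => /andP [-> s] /=; apply/allP => x /(allP s) /=; rewrite mem_cat => ->; done.
  + move: (IHh _ H) => /andP [-> s] /=; apply/allP => x /(allP s) /=; rewrite mem_cat orbC => ->; done.
Qed.

Theorem lemma6 (f : ltl) (c : fconj) : c \in simp f -> in_SET (dplus f) c.
Proof.
move=> /simp_sub /andP [nc sc]; right.
exists [seq x <- dplus f | x \in c].
  apply/andP; split; last exact: filter_subseq.
  case: c nc sc => // x c _ /= /andP [hx _].
  have : x \in [seq y <- dplus f | y \in x :: c] by rewrite mem_filter inE eqxx hx.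
  by case: [seq y <- dplus f | y \in x :: c].
move=> x; rewrite mem_filter; apply/idP/andP => [h|[]//].
by split => //; apply: (allP sc).
Qed.
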